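(* Let $r\ge 3$ be a fixed integer, let $H=(V_H,E_H)$ be a directed $r$-uniform hypergraph on $n$ nodes $u_1,\dots,u_n$ and $m$ hyperedges, and let $k\leq n$ be an integer. Then the polynomial $$P_k(x_1,\dots,x_n)=\sum_{(u_{i_1},\dots,u_{i_k})\text{ a tight walk in }H} x_{i_1}\cdots x_{i_k}$$ is computable by an arithmetic circuit of size $O(mk)$.
   Context: A directed $r$-uniform hypergraph has hyperedges that are ordered sequences of $r$ nodes. A tight walk of length $k$ in $H$ is a sequence $(u_{i_1},\dots,u_{i_k})$ of nodes, not necessarily distinct, such that every $r$ consecutive nodes $(u_{i_j},\dots,u_{i_{j+r-1}})$, $1\le j\le k-r+1$, form a hyperedge of $H$. An arithmetic circuit over a ring $K$ is a directed acyclic graph whose nodes are labeled by $+$, $\times$, input variables $x_1,\dots,x_n$, or constants from $K$; each output node computes a polynomial in $K[x_1,\dots,x_n]$, and the size of the circuit is its number of nodes. *)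

(* Defs.v *)
From HB Require Import structures.
From mathcomp Require Import all_boot all_order all_algebra.
From mathcomp Require Import mpoly.
Set Implicit Arguments. Unset Strict Implicit. Unset Printing Implicit Defensive.
Import GRing.Theory.
Local Open Scope ring_scope.

(** Directed r-uniform hypergraph on nodes 'I_n: a set of hyperedges,
    each an ordered r-tuple of nodes.  m = #|E|. *)

Definition tight_walk (r n k : nat) (E : {set r.-tuple 'I_n}) (w : k.-tuple 'I_n) : bool :=
  [forall j : 'I_k.+1, (j + r <= k)%N ==>
     [exists e in E, val e == take r (drop j w)]].

Definition Pk (K : comNzRingType) (r n : nat) (E : {set r.-tuple 'I_n}) (k : nat)
  : {mpoly K[n]} :=
  \sum_(w : k.-tuple 'I_n | tight_walk E w) \prod_(i <- w) 'X_i.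

(** Arithmetic circuits: a DAG given as a list of nodes in topological
    order; a +/× node lists its (earlier) input nodes by position. *)
Inductive gate (K : Type) (n : nat) :=
| GIn of 'I_n
| GConst of K
| GAdd of seq nat
| GMul of seq nat.

Definition circuit (K : Type) (n : nat) := seq (gate K n).

Definition gate_wf (K : Type) (n : nat) (pos : nat) (g : gate K n) : bool :=
  match g with
  | GAdd s | GMul s => all (fun j => j < pos)%N s
  | _ => true
  end.

Fixpoint circuit_wf_aux (K : Type) (n : nat) (pos : nat) (c : circuit K n) : bool :=
  match c with
  | [::] => true
  | g :: c' => gate_wf pos g && circuit_wf_aux pos.+1 c'
  end.

Definition circuit_wf (K : Type) (n : nat) (c : circuit K n) := circuit_wf_aux 0 c.

Definition gate_val (K : comNzRingType) (n : nat) (vals : seq {mpoly K[n]})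
  (g : gate K n) : {mpoly K[n]} :=
  match g with
  | GIn i => 'X_i
  | GConst a => a%:MP
  | GAdd s => \sum_(j <- s) nth 0 vals j
  | GMul s => \prod_(j <- s) nth 0 vals j
  end.

Fixpoint circuit_vals_aux (K : comNzRingType) (n : nat) (vals : seq {mpoly K[n]})
  (c : circuit K n) : seq {mpoly K[n]} :=
  match c with
  | [::] => vals
  | g :: c' => circuit_vals_aux (rcons vals (gate_val vals g)) c'
  end.

Definition circuit_vals (K : comNzRingType) (n : nat) (c : circuit K n) :=
  circuit_vals_aux [::] c.

Definition computes (K : comNzRingType) (n : nat) (c : circuit K n) (p : {mpoly K[n]}) : Prop :=
  circuit_wf c /\ p \in circuit_vals c.

Definition csize (K : Type) (n : nat) (c : circuit K n) : nat := size c.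

(* Submission.v *)
From Pilot Require Import Defs.
From HB Require Import structures.
From mathcomp Require Import all_boot all_order all_algebra.
From mathcomp Require Import mpoly.
From mathcomp Require Import zify.
Set Implicit Arguments. Unset Strict Implicit. Unset Printing Implicit Defensive.
Import GRing.Theory.

Lemma tuple_split (R : Type) (idx : R) (op : Monoid.com_law idx) (T : finType) (m : nat)
  (P : pred (m.+1.-tuple T)) (G : m.+1.-tuple T -> R) :
  \big[op/idx]_(t | P t) G t =
  \big[op/idx]_(x : T) \big[op/idx]_(t : m.-tuple T | P [tuple of x :: t]) G [tuple of x :: t].
Proof.
rewrite pair_big_dep /=.
rewrite (reindex (fun p : T * m.-tuple T => [tuple of p.1 :: p.2])) /=.
  by apply: eq_bigl => -[x t].
exists (fun t => (thead t, [tuple of behead t])).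
  move=> [x t] _ /=; rewrite theadE; congr pair; exact: val_inj.
by move=> t _ /=; rewrite -tuple_eta.
Qed.

Section Math.
Variables (K : comNzRingType) (n r : nat) (E : {set r.-tuple 'I_n}).
Hypothesis hr : 0 < r.
Local Open Scope ring_scope.

Definition mono (s : seq 'I_n) : {mpoly K[n]} := \prod_(i <- s) 'X_i.
Definition win (s : seq 'I_n) j := [exists e in E, val e == take r (drop j s)].
Definition tw (s : seq 'I_n) := forall j, (j + r <= size s)%N -> win s j.

Lemma twP k (w : k.-tuple 'I_n) : reflect (tw w) (tight_walk E w).
Proof.
apply: (iffP forallP) => H j.
  move=> hj; have hjk : (j < k.+1)%N by rewrite size_tuple in hj; lia.
  by move: (H (Ordinal hjk)) => /= /implyP; apply; rewrite -(size_tuple w).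
by apply/implyP => hj; apply: H; rewrite size_tuple.
Qed.

Lemma tw_cons x s : (r <= size s)%N -> tw (x :: s) <-> win (x :: s) 0 /\ tw s.
Proof.
move=> hs; split.
  move=> H; split; first by apply: H => /=; lia.
  by move=> j hj; apply: (H j.+1) => /=; lia.
move=> [H0 H] [|j] hj //; apply: H => /=; move: hj => /=; lia.
Qed.

Definition F j (e : r.-tuple 'I_n) : {mpoly K[n]} :=
  \sum_(w : (j + r).-tuple 'I_n | tight_walk E w && (take r w == val e)) mono w.

Lemma F0 e : e \in E -> F 0 e = mono e.
Proof.
move=> He; rewrite /F (big_pred1 (e : (0 + r).-tuple 'I_n)) //.
move=> w /=; rewrite take_oversize ?size_tuple //.
apply/andP/eqP => [[_ /eqP]|->]; first exact: val_inj.
split => //; apply/twP => j; rewrite size_tuple => hj.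
have -> : j = 0%N by lia.
by apply/existsP; exists e; rewrite He drop0 take_oversize ?size_tuple ?eqxx //; lia.
Qed.

Lemma win0_take s e : e \in E -> take r s == val e -> win s 0.
Proof. by move=> He /eqP h; apply/existsP; exists e; rewrite He drop0 h eqxx. Qed.

Lemma FS j e (i0 : 'I_n) : e \in E ->
  F j.+1 e = 'X_(nth i0 e 0) * \sum_(e' in E | take r.-1 e' == behead e) F j e'.
Proof.
move=> He; rewrite /F (@tuple_split _ _ _ _ (j + r)).
have ea : val e = nth i0 e 0 :: behead e.
  case: e He => s hs He /=; case: s hs He => [|b s] //= hs _; move: hr; by rewrite -(eqP hs).
set a := nth i0 e 0.
have hcond : forall x (t : (j + r).-tuple 'I_n),
   tight_walk E [tuple of x :: t] && (take r (x :: t) == val e) =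
   (x == a) && (tight_walk E t && (take r.-1 t == behead e)).
  move=> x t.
  have htk : take r (x :: t) = x :: take r.-1 t by rewrite -{1}(prednK hr).
  case h: (take r (x :: t) == val e).
    move: (h); rewrite htk ea eqseq_cons => /andP[-> ->]; rewrite !andbT /=.
    apply/idP/idP => /twP H; apply/twP.
      by apply tw_cons in H as [_ H] => //; rewrite size_tuple; lia.
    by apply/tw_cons; [rewrite size_tuple; lia| split => //; exact: win0_take h].
  rewrite andbF; move: h; rewrite htk ea eqseq_cons.
  by case: (x == a); case: (take _ t == _); rewrite ?andbF.
under eq_bigr => x _ do under eq_bigl => t do rewrite hcond.
rewrite (bigD1 a) //=.
rewrite [X in _ + X = _]big1 ?addr0; last first.
  by move=> x /negbTE hx; rewrite big_pred0 // => t; rewrite hx.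
under eq_bigl => t do rewrite eqxx /=.
under eq_bigr => t _ do rewrite /mono big_cons.
rewrite -mulr_sumr; congr (_ * _).
rewrite (partition_big (fun t : (j + r).-tuple 'I_n => insubd e (take r t) : r.-tuple 'I_n)
   [pred e' | (e' \in E) && (take r.-1 e' == behead e)]) /=.
  apply: eq_bigr => e' /andP[He' hc]; apply: eq_bigl => t.
  have hv : val (insubd e (take r t) : r.-tuple 'I_n) = take r t.
    by rewrite val_insubd size_takel ?size_tuple ?eqxx //; lia.
  rewrite -val_eqE /= hv.
  case h: (take r t == val e'); rewrite ?andbT ?andbF //.
  rewrite -(eqP h) take_takel in hc; last by lia.
  by rewrite hc andbT.
move=> t /andP[/twP ht hc].
have hv : val (insubd e (take r t) : r.-tuple 'I_n) = take r t.
  by rewrite val_insubd size_takel ?size_tuple ?eqxx //; lia.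
have := ht 0%N; rewrite size_tuple => /(_ ltac:(lia)) /existsP[e'' /andP[He'' /eqP he'']].
have -> : insubd e (take r t) = e'' by apply: val_inj; rewrite hv he'' drop0.
rewrite He'' /= -(eqP hc) he'' drop0 take_takel //; lia.
Qed.

Lemma PkF (j : nat) (e0 : r.-tuple 'I_n) : Pk K E (j + r) = \sum_(e in E) F j e.
Proof.
rewrite /Pk (partition_big (fun t : (j + r).-tuple 'I_n => insubd e0 (take r t) : r.-tuple 'I_n)
   (mem E)) /=.
  apply: eq_bigr => e He; apply: eq_bigl => t.
  have hv : val (insubd e0 (take r t) : r.-tuple 'I_n) = take r t.
    by rewrite val_insubd size_takel ?size_tuple ?eqxx //; lia.
  by rewrite -val_eqE /= hv.
move=> t /twP ht.
have hv : val (insubd e0 (take r t) : r.-tuple 'I_n) = take r t.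
  by rewrite val_insubd size_takel ?size_tuple ?eqxx //; lia.
have := ht 0%N; rewrite size_tuple => /(_ ltac:(lia)) /existsP[e'' /andP[He'' /eqP he'']].
have -> : insubd e0 (take r t) = e'' by apply: val_inj; rewrite hv he'' drop0.
exact: He''.
Qed.

End Math.
Section Circ.
Variables (K : comNzRingType) (n : nat).
Local Notation g0 := (GAdd K n [::]).

Lemma cva_size (vals : seq {mpoly K[n]}) (c : circuit K n) :
  size (circuit_vals_aux vals c) = (size vals + size c)%N.
Proof.
elim: c vals => [|g c IH] vals /=; first by rewrite addn0.
by rewrite IH size_rcons addSnnS.
Qed.

Lemma cva_spec (V : nat -> {mpoly K[n]}) (c : circuit K n) (vals : seq {mpoly K[n]}) :
  (forall q, (q < size vals)%N -> nth 0%R vals q = V q) ->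
  (forall p, (size vals <= p < size vals + size c)%N ->
     forall vs : seq {mpoly K[n]}, size vs = p -> (forall q, (q < p)%N -> nth 0%R vs q = V q) ->
     gate_val vs (nth g0 c (p - size vals)) = V p) ->
  forall q, (q < size vals + size c)%N -> nth 0%R (circuit_vals_aux vals c) q = V q.
Proof.
elim: c vals => [|g c IH] vals H1 H2 /=; first by move=> q; rewrite addn0; exact: H1.
move=> q0 hq0; apply: IH; last by rewrite size_rcons addSn -addnS.
  move=> q; rewrite size_rcons nth_rcons ltnS leq_eqVlt => /orP[/eqP->|hq].
    rewrite ltnn eqxx; have := H2 (size vals) _ vals erefl H1.
    by rewrite subnn /=; apply; rewrite leqnn /= addnS ltnS leq_addr.
  by rewrite hq; apply: H1.
move=> p; rewrite size_rcons => hp vs hvs hV.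
have := H2 p _ vs hvs hV.
have -> : (p - size vals = (p - (size vals).+1).+1)%N by move: hp; lia.
by apply; rewrite /=; move: hp; lia.
Qed.

Lemma cwf_aux (c : circuit K n) pos :
  (forall p, (p < size c)%N -> gate_wf (pos + p) (nth g0 c p)) -> circuit_wf_aux pos c.
Proof.
elim: c pos => [|g c IH] pos H //=.
apply/andP; split; first by have := H 0%N erefl; rewrite addn0.
apply: IH => p hp; have := H p.+1 hp; by rewrite addnS.
Qed.

End Circ.

Inductive kind := KIn of nat & nat | KA of nat & nat | KB of nat & nat | KOut | KNone.

Section Dec.
Variables (r m Kd : nat).
Hypothesis hr : (0 < r)%N.

Definition posA L i := (r * m + L * (2 * m) + 2 * i)%N.
Definition posO := (r * m + Kd.+1 * (2 * m))%N.

Definition dec p : kind :=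
  if (p < r * m)%N then KIn (p %/ r) (p %% r)
  else if (p < posO)%N then
    let q := (p - r * m)%N in
    let s := (q %% (2 * m))%N in
    if odd s then KB (q %/ (2 * m)) s./2 else KA (q %/ (2 * m)) s./2
  else if p == posO then KOut else KNone.

Lemma ir_lt i t : (i < m)%N -> (t < r)%N -> (i * r + t < r * m)%N.
Proof. move=> hi ht; have : (i.+1 * r <= m * r)%N by rewrite leq_mul2r hi orbT. lia. Qed.

Lemma decIn i t : (i < m)%N -> (t < r)%N -> dec (i * r + t) = KIn i t.
Proof.
move=> hi ht; rewrite /dec ir_lt // divnMDl // modnMDl divn_small // modn_small //.
by rewrite addn0.
Qed.

Lemma decAB L i b : (L <= Kd)%N -> (i < m)%N -> (b < 2)%N ->
  dec (posA L i + b) = if b == 1%N then KB L i else KA L i.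
Proof.
move=> hL hi hb; rewrite /dec /posA.
have h1 : (L * (2 * m) + (2 * i + b) < Kd.+1 * (2 * m))%N.
  have : (L.+1 * (2 * m) <= Kd.+1 * (2 * m))%N by rewrite leq_mul2r ltnS hL orbT.
  lia.
have -> : (r * m + L * (2 * m) + 2 * i + b < r * m)%N = false by lia.
rewrite /posO; have -> : (r * m + L * (2 * m) + 2 * i + b < r * m + Kd.+1 * (2 * m))%N by lia.
have -> : (r * m + L * (2 * m) + 2 * i + b - r * m = L * (2 * m) + (2 * i + b))%N by lia.
have hm : (0 < 2 * m)%N by lia.
rewrite divnMDl // modnMDl divn_small ?modn_small ?addn0; try lia.
rewrite mul2n; move: hb; clear h1; case: b => [|[|b]] // _; rewrite ?addn0 ?addn1 /=.
  by rewrite odd_double doubleK.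
by rewrite odd_double /= uphalf_double.
Qed.

Lemma decA L i : (L <= Kd)%N -> (i < m)%N -> dec (posA L i) = KA L i.
Proof. by move=> hL hi; have := decAB hL hi (isT : (0 < 2)%N); rewrite addn0. Qed.
Lemma decB L i : (L <= Kd)%N -> (i < m)%N -> dec (posA L i).+1 = KB L i.
Proof. by move=> hL hi; have := decAB hL hi (isT : (1 < 2)%N); rewrite addn1. Qed.

Lemma decInv p : match dec p with
  | KIn i t => [/\ (i < m)%N, (t < r)%N & p = i * r + t]
  | KA L i => [/\ (L <= Kd)%N, (i < m)%N & p = posA L i]
  | KB L i => [/\ (L <= Kd)%N, (i < m)%N & p = (posA L i).+1]
  | KOut => p = posO
  | KNone => (posO < p)%N end.
Proof.
rewrite /dec; case: ltnP => h1.
  split; last exact: divn_eq.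
    by rewrite ltn_divLR // mulnC.
  exact: ltn_pmod.
case: ltnP => h2.
  set q := (p - r * m)%N.
  have hm : (0 < 2 * m)%N by move: h1 h2; rewrite /posO; lia.
  have hL : (q %/ (2 * m) <= Kd)%N by rewrite -ltnS ltn_divLR // /q; move: h2; rewrite /posO; lia.
  have hs := ltn_pmod q hm.
  have hq := divn_eq q (2 * m).
  have ho := odd_double_half (q %% (2 * m)).
  case: ifP => hodd; rewrite hodd /= in ho; (split; [exact: hL| |]); rewrite /posA -?mul2n; try lia.
case: eqP => // hne; move: h2; rewrite leq_eqVlt => /orP[/eqP h|] //.
by case: hne.
Qed.

End Dec.


Section Build.
Variables (K : comNzRingType) (n r : nat) (E : {set r.-tuple 'I_n}).
Variables (e0 : r.-tuple 'I_n) (i0 : 'I_n) (Kd : nat).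
Hypothesis hr : (0 < r)%N.
Local Open Scope ring_scope.
Local Notation m := #|E|.
Ltac mlia := repeat match goal with H : is_true (leq _ _) |- _ => revert H end;
  rewrite ?add0n; set M := #|E|; lia.

Definition Ei i := nth e0 (enum E) i.
Definition compat i' i := take r.-1 (Ei i') == behead (Ei i).
Local Notation dec := (dec r m Kd).
Local Notation posA := (posA r m).
Local Notation posO := (posO r m Kd).

Definition g p : gate K n :=
  match dec p with
  | KIn i t => GIn K (nth i0 (Ei i) t)
  | KA 0 i => GMul K n [seq (i * r + t)%N | t <- iota 0 r]
  | KB 0 i => GAdd K n [:: posA 0 i]
  | KA L.+1 i => GAdd K n [seq (posA L i').+1 | i' <- iota 0 m & compat i' i]
  | KB L.+1 i => GMul K n [:: (i * r)%N; posA L.+1 i]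
  | KOut => GAdd K n [seq (posA Kd i).+1 | i <- iota 0 m]
  | KNone => GAdd K n [::]
  end.

Definition V p : {mpoly K[n]} :=
  match dec p with
  | KIn i t => 'X_(nth i0 (Ei i) t)
  | KA 0 i => mono K (Ei i)
  | KA L.+1 i => \sum_(i' <- iota 0 m | compat i' i) F K E L (Ei i')
  | KB L i => F K E L (Ei i)
  | KOut => \sum_(i <- iota 0 m) F K E Kd (Ei i)
  | KNone => 0
  end.

Lemma EiE i : (i < m)%N -> Ei i \in E.
Proof. by move=> hi; rewrite -mem_enum /Ei mem_nth // -cardE. Qed.

Lemma sum_enum (G : r.-tuple 'I_n -> {mpoly K[n]}) (P : pred (r.-tuple 'I_n)) :
  \sum_(e in E | P e) G e = \sum_(i <- iota 0 m | P (Ei i)) G (Ei i).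
Proof. by rewrite -big_enum_cond (big_nth e0) -cardE /index_iota subn0. Qed.

Lemma gV p (vs : seq {mpoly K[n]}) : size vs = p ->
  (forall q, (q < p)%N -> nth 0 vs q = V q) -> gate_val vs (g p) = V p.
Proof.
move=> _ hV; rewrite /g /V.
move: (decInv m Kd hr p); case: (dec p) => [i t [hi ht hp]|[|L] i [hL hi hp]|[|L] i [hL hi hp]|hp|//] //=; try subst p.
- rewrite big_map /mono (big_nth i0) size_tuple /index_iota subn0.
  apply: eq_big_seq => t; rewrite mem_iota => /andP[_ ht].
  rewrite hV; last by have := ir_lt hr hi ht; rewrite /posA; mlia.
  by rewrite /V decIn.
- rewrite big_map big_filter big_seq_cond [RHS]big_seq_cond.
  apply: eq_bigr => i' /andP[hi' _]; move: hi'; rewrite mem_iota => /andP[_ hi'].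
  rewrite hV; last by rewrite /posA (mulSn L); move: hi'; rewrite add0n; mlia.
  by rewrite /V decB //; mlia.
- rewrite big_seq1 hV; last by [].
  by rewrite /V decA // F0 // EiE.
- rewrite big_cons big_seq1.
  rewrite hV; last by have := ir_lt hr hi hr; rewrite addn0 /posA; mlia.
  rewrite hV; last by [].
  rewrite /V -[(i * r)%N]addn0 decIn // decA // (@FS K n r E hr L (Ei i) i0) ?EiE // sum_enum.
  by [].
- rewrite big_map big_seq [RHS]big_seq.
  apply: eq_bigr => i; rewrite mem_iota => /andP[_ hi].
  rewrite hV; last by rewrite /posA /posO (mulSn Kd); mlia.
  by rewrite /V decB.
- by rewrite big_nil.
Qed.

Lemma gwf p : gate_wf p (g p).
Proof.
rewrite /g.
move: (decInv m Kd hr p); case: (dec p) => [i t [hi ht hp]|[|L] i [hL hi hp]|[|L] i [hL hi hp]|hp|//] //=; try subst p.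
- rewrite all_map; apply/allP => t; rewrite mem_iota => /andP[_ ht] /=.
  by have := ir_lt hr hi ht; rewrite /posA; mlia.
- rewrite all_map; apply/allP => i'; rewrite mem_filter mem_iota => /andP[_ /andP[_ hi']] /=.
  by rewrite /posA (mulSn L); mlia.
- by rewrite andbT.
- rewrite andbT; apply/andP; split => //.
  by have := ir_lt hr hi hr; rewrite addn0 /posA; mlia.
- rewrite all_map; apply/allP => i; rewrite mem_iota => /andP[_ hi] /=.
  by rewrite /posA /posO (mulSn Kd); mlia.
Qed.

Definition circ : circuit K n := mkseq g posO.+1.

Lemma decO : dec posO = KOut.
Proof. by rewrite /Pilot.Submission.dec ltnn eqxx; have -> : (posO < r * m)%N = false by rewrite /posO; mlia. Qed.

Lemma circ_ok : computes circ (Pk K E (Kd + r)).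
Proof.
split.
  apply: cwf_aux => p; rewrite /circ size_mkseq => hp; rewrite nth_mkseq // add0n; exact: gwf.
have hq : forall q, (q < size circ)%N -> nth 0 (circuit_vals circ) q = V q.
  move=> q hq; apply: (@cva_spec K n V circ [::]) => //.
  move=> p hp vs hvs hV'; rewrite subn0 /circ nth_mkseq; first exact: gV.
  by move: hp; rewrite /circ size_mkseq /= add0n.
have hO : V posO = Pk K E (Kd + r).
  by rewrite /V decO (@PkF K n r E hr Kd e0) -big_enum (big_nth e0) -cardE /index_iota subn0.
rewrite -hO -hq ?mem_nth // /circuit_vals ?cva_size /circ size_mkseq //.
Qed.

End Build.

Theorem mainTheorem5 (r : nat) (hr : 3 <= r) :
  exists C : nat,
    forall (K : comNzRingType) (n : nat) (E : {set r.-tuple 'I_n}) (k : nat),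
      r <= k -> k <= n ->
      exists c : circuit K n,
        computes c (Pk K E k) /\ csize c <= C * (#|E| * k + 1).
Proof.
exists (r + 2) => K n E k hk hkn.
have hr0 : 0 < r by lia.
have n0 : 0 < n by lia.
pose i0 := Ordinal n0.
pose e0 := [tuple of nseq r i0].
have -> : k = (k - r) + r by lia.
exists (@circ K n r E e0 i0 (k - r)); split; first exact: circ_ok.
rewrite /csize /circ size_mkseq /posO.
set M := #|E|; set Kd := k - r; clearbody Kd.
nia.
Qed.
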